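(* Let $X_i=E_{i,i+1}+E_{4n-1-i,4n-i}$ for $1\le i\le 2n-1$ (so $X_{2n-1}=E_{2n-1,2n}+E_{2n,2n+1}$), and let $s_{i_1}\cdots s_{i_N}$ be the word $((s_1s_3\cdots s_{2n-1})(s_2s_4\cdots s_{2n-2}))^{2n-1}$. Then every matrix of the form $e^{t_1X_{i_1}}e^{t_2X_{i_2}}\cdots e^{t_NX_{i_N}}$ with all $t_j>0$ (i.e. every element of the positive subsemigroup of $\mathrm{SO}(2n,2n-1)$ for the diagonal Cartan subalgebra, simple roots $a_i-a_{i+1}$, $1\le i\le 2n-1$, and root vectors $X_i$) lies in the positive subsemigroup of $\mathrm{SL}(4n-1,\mathbb{R})$, namely the set of products $e^{u_1E_{j_1,j_1+1}}\cdots e^{u_ME_{j_M,j_M+1}}$ with all $u_k>0$ along the reduced word $(s_1s_{4n-2}s_3s_{4n-4}\cdots s_{2n-1}s_{2n}s_{2n-1}s_2s_{4n-3}s_4s_{4n-5}\cdots s_{2n-2}s_{2n})^{2n-1}$ for the longest Weyl group element; in particular it is upper triangular totally positive (all minors not forced to vanish by upper triangularity are strictly positive).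
   Context: $E_{i,j}$ is the $(4n-1)\times(4n-1)$ matrix with a $1$ in position $(i,j)$ and zeros elsewhere. $\mathrm{SO}(2n,2n-1)$ is the group of determinant-one matrices $M$ with $M^TJM=J$, $J$ antidiagonal with $J_{i,4n-i}=(-1)^i$. $s_i$ denotes the simple reflection associated to the $i$-th simple root. *)

(* Defs.v *)
From HB Require Import structures.
From mathcomp Require Import all_boot all_order all_algebra.
From mathcomp Require Import reals.
Set Implicit Arguments. Unset Strict Implicit. Unset Printing Implicit Defensive.
Import Order.TTheory GRing.Theory Num.Theory.
Local Open Scope ring_scope.

Section Defs.
Variable R : realType.

(* Matrix units with the paper's 1-based indices: E m i j has a 1 at
   position (i,j) (1 <= i,j <= m) and zeros elsewhere. *)
Definition E (m i j : nat) : 'M[R]_m :=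
  \matrix_(a < m, b < m) ((nat_of_ord a == i.-1) && (nat_of_ord b == j.-1))%:R.

Definition mxpow (m : nat) (A : 'M[R]_m) (k : nat) : 'M[R]_m :=
  iter k (mulmx A) 1%:M.

(* For the matrices to which it is applied below
   (real multiples of strictly upper triangular m x m matrices, which are
   nilpotent with A^m = 0) this is exactly e^A. *)
Definition expm (m : nat) (A : 'M[R]_m) : 'M[R]_m :=
  \sum_(k < m) (k`!%:R)^-1 *: mxpow A k.

Definition dim (n : nat) : nat := (4 * n - 1)%N.

Definition Xso (n i : nat) : 'M[R]_(dim n) :=
  E (dim n) i i.+1 + E (dim n) (4 * n - 1 - i) (4 * n - i).

Definition Xsl (n j : nat) : 'M[R]_(dim n) := E (dim n) j j.+1.

Definition word_prod (m : nat) (X : nat -> 'M[R]_m) (w : seq nat) (ts : seq R)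
  : 'M[R]_m :=
  foldr (fun p M => expm (p.2 *: X p.1) *m M) 1%:M (zip w ts).

Definition in_pos_semigroup (m : nat) (X : nat -> 'M[R]_m) (w : seq nat)
  (M : 'M[R]_m) : Prop :=
  exists us : seq R,
    size us = size w /\ all (fun u => 0 < u) us /\ M = word_prod X w us.

Definition upper_TP (m : nat) (M : 'M[R]_m) : Prop :=
  (forall i j : 'I_m, (j < i)%N -> M i j = 0) /\
  (forall (k : nat) (I J : 'I_k -> 'I_m),
      (forall a b : 'I_k, (a < b)%N -> (I a < I b)%N) ->
      (forall a b : 'I_k, (a < b)%N -> (J a < J b)%N) ->
      (forall a : 'I_k, (I a <= J a)%N) ->
      0 < \det (\matrix_(a < k, b < k) M (I a) (J b))).
End Defs.

(* The word ((s_1 s_3 ... s_{2n-1})(s_2 s_4 ... s_{2n-2}))^{2n-1}. *)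
Local Open Scope nat_scope.
Definition so_block (n : nat) : seq nat :=
  [seq (2 * k).+1 | k <- iota 0 n] ++ [seq (2 * k).+2 | k <- iota 0 n.-1].
Definition so_word (n : nat) : seq nat :=
  flatten (nseq (2 * n - 1) (so_block n)).

(* The word (s_1 s_{4n-2} s_3 s_{4n-4} ... s_{2n-1} s_{2n} s_{2n-1}
              s_2 s_{4n-3} s_4 s_{4n-5} ... s_{2n-2} s_{2n+1})^{2n-1}. *)
Definition sl_block (n : nat) : seq nat :=
  flatten [seq [:: (2 * k).+1; 4 * n - 2 - 2 * k] | k <- iota 0 n]
  ++ [:: (2 * n).-1]
  ++ flatten [seq [:: (2 * k).+2; 4 * n - 3 - 2 * k] | k <- iota 0 n.-1].
Definition sl_word (n : nat) : seq nat :=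
  flatten (nseq (2 * n - 1) (sl_block n)).

(* Main.v *)
Require Import Defs.
From HB Require Import structures.
From mathcomp Require Import all_boot all_order all_algebra.
From mathcomp Require Import reals.
From mathcomp Require Import zify ring.
From Stdlib Require Import Classical.
Set Implicit Arguments. Unset Strict Implicit. Unset Printing Implicit Defensive.
Import Order.TTheory GRing.Theory Num.Theory.
Import Defs.

Section Comb.
Variable k : nat.

Definition upd (p : nat -> nat) (a v : nat) : nat -> nat :=
  fun b => if b == a then v else p b.

Fixpoint reach (w : seq nat) (p q : nat -> nat) : Prop :=
  match w with
  | [::] => forall a, a < k -> p a = q a
  | j :: w' => reach w' p q \/
      exists a, [/\ a < k, 0 < j, p a = j.-1, (a.+1 < k -> p a.+1 <> j)
                  & reach w' (upd p a j) q]
  end.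

Definition eqk (p q : nat -> nat) := forall a, a < k -> p a = q a.
Definition inc (p : nat -> nat) := forall a b, a < b -> b < k -> p a < p b.
Definition lek (p q : nat -> nat) := forall a, a < k -> p a <= q a.

Lemma reach_ext w p q p' q' : reach w p q -> eqk p p' -> eqk q q' -> reach w p' q'.
Proof.
elim: w p p' => [|j w IH] p p' /= H Hp Hq.
  by move=> a ak; rewrite -Hp // -Hq // H.
case: H => [H|[a [ak j0 pa pf H]]]; first by left; exact: IH H Hp Hq.
right; exists a; split => //.
- by rewrite -Hp.
- by move=> ak1; rewrite -Hp //; apply: pf.
apply: IH H _ Hq => b bk; rewrite /upd; case: eqP => // _; exact: Hp.
Qed.

Lemma reach_cat u v p r q : reach u p r -> reach v r q -> reach (u ++ v) p q.
Proof.
elim: u p => [|j u IH] p /= H1 H2.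
  by apply: reach_ext H2 _ _ => a ak; [rewrite H1|].
case: H1 => [H1|[a [ak j0 pa pf H1]]]; first by left; exact: IH H1 H2.
by right; exists a; split => //; exact: IH H1 H2.
Qed.

Lemma reach_nil_refl w p : reach w p p.
Proof. by elim: w => [|j w IH] //=; left. Qed.

Definition g (j : nat) (p : nat -> nat) : nat -> nat := fun b =>
  if [&& b < k, 0 < j, p b == j.-1 & (b.+1 < k) ==> (p b.+1 != j)] then j else p b.

Definition G (w : seq nat) (p : nat -> nat) := foldl (fun p j => g j p) p w.

Lemma g_cases j p b : g j p b = p b \/
  [/\ b < k, 0 < j, p b = j.-1, g j p b = j & (b.+1 < k -> p b.+1 <> j)].
Proof.
rewrite /g; case: (boolP [&& _, _, _ & _]) => [/and4P [bk j0 /eqP pb H]|_]; last by left.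
right; split => // bk1; move: H; rewrite bk1 /= => /eqP; done.
Qed.

Lemma g_inc j p : inc p -> inc (g j p).
Proof.
move=> ip a b ab bk.
have ipab := ip a b ab bk.
have ak : a < k by lia.
have [ga|[_ j0 pa ga pf]] := g_cases j p a;
have [gb|[_ _ pb gb _]] := g_cases j p b; rewrite ?ga ?gb; try lia.
have a1k : a.+1 < k by lia.
have := pf a1k; have := ip a a.+1 (ltnSn a) a1k.
case: (ltnP a.+1 b) => [a1b|ba]; last by have e : b = a.+1 := ltac:(lia); rewrite e; lia.
have := ip a.+1 b a1b bk; lia.
Qed.

Lemma le_g j p : lek p (g j p).
Proof. by move=> b bk; case: (g_cases j p b) => [->|[_ _ pb -> _]] //; lia. Qed.

Lemma g_mono j p p' : inc p -> inc p' -> lek p p' -> lek (g j p) (g j p').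
Proof.
move=> ip ip' le b bk.
have lb := le b bk.
have [gpb|[_ j0 pb gpb pf]] := g_cases j p b.
  by rewrite gpb; exact: leq_trans lb (le_g j p' bk).
rewrite gpb.
case: (ltnP (p' b) j) => lt; last exact: leq_trans lt (le_g j p' bk).
have p'b : p' b = j.-1 by lia.
suff -> : g j p' b = j by [].
rewrite /g bk j0 p'b eqxx /=.
case: (ltnP b.+1 k) => [b1k|kb] //=.
have h1 := pf b1k; have h2 := ip b b.+1 (ltnSn b) b1k; have h3 := le b.+1 b1k.
have H : p' b.+1 != j by apply/eqP; lia.
by rewrite H.
Qed.

Lemma G_inc w p : inc p -> inc (G w p).
Proof. elim: w p => [|j w IH] p ip //=; apply: IH; exact: g_inc. Qed.

Lemma le_G w p : lek p (G w p).
Proof.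
elim: w p => [|j w IH] p /= b bk //.
exact: leq_trans (le_g j p bk) (IH _ b bk).
Qed.

Lemma G_mono w p p' : inc p -> inc p' -> lek p p' -> lek (G w p) (G w p').
Proof.
elim: w p p' => [|j w IH] p p' ip ip' le //=.
by apply: IH; [exact: g_inc|exact: g_inc|exact: g_mono].
Qed.

Lemma g_ext j p p' : eqk p p' -> eqk (g j p) (g j p').
Proof.
move=> e b bk; rewrite /g e //.
case: (ltnP b.+1 k) => [b1k|kb]; first by rewrite e.
by [].
Qed.

Lemma G_ext w p p' : eqk p p' -> eqk (G w p) (G w p').
Proof. elim: w p p' => [|j w IH] p p' e //=; apply: IH; exact: g_ext. Qed.

Lemma upd_inc p a j : inc p -> a < k -> p a = j.-1 -> 0 < j ->
  (a.+1 < k -> p a.+1 <> j) -> inc (upd p a j).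
Proof.
move=> ip ak pa j0 pf b c bc ck; rewrite /upd.
case: (eqVneq b a) => [eb|nb]; case: (eqVneq c a) => [ec|nc]; try lia.
- subst b.
  have a1k : a.+1 < k by lia.
  have := pf a1k; have := ip a a.+1 (ltnSn _) a1k.
  case: (ltnP a.+1 c) => [a1c|ca1]; last by have e : c = a.+1 := ltac:(lia); rewrite e; lia.
  have := ip _ _ a1c ck; lia.
- subst c; have := ip b a; lia.
- exact: ip.
Qed.

Lemma g_upd p a j : inc p -> a < k -> p a = j.-1 -> 0 < j ->
  (a.+1 < k -> p a.+1 <> j) -> eqk (g j p) (upd p a j).
Proof.
move=> ip ak pa j0 pf b bk; rewrite /upd /g.
case: (eqVneq b a) => [eb|ba].
  subst b; rewrite ak j0 pa eqxx /=; case: (ltnP a.+1 k) => [a1k|] //=.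
  have H : p a.+1 != j by apply/eqP; exact: pf.
  by rewrite H.
have -> : (p b == j.-1) = false.
  apply/eqP; case: (ltngtP b a) => [ba'|ab|e]; last by rewrite e eqxx in ba.
  - by have := ip _ _ ba' ak; lia.
  - by have := ip _ _ ab bk; lia.
by rewrite !andbF.
Qed.

Lemma reach_le_G w p q : inc p -> reach w p q -> lek q (G w p).
Proof.
elim: w p => [|j w IH] p ip /=.
  by move=> H a ak; rewrite -H.
case=> [H|[a [ak j0 pa pf H]]].
  move=> b bk; apply: leq_trans (IH p ip H b bk) _.
  apply: G_mono => //; [exact: g_inc|exact: le_g].
have iu := upd_inc ip ak pa j0 pf.
move=> b bk; rewrite (G_ext w (g_upd ip ak pa j0 pf)) //.
exact: IH iu H b bk.
Qed.

Lemma reach_interval w p q : inc p -> inc q -> lek p q -> lek q (G w p) ->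
  reach w p q.
Proof.
elim/last_ind: w q => [|w j IH] q ip iq lpq lqG.
  by move=> a ak; apply/eqP; rewrite eqn_leq lpq //; exact: lqG.
rewrite -cats1.
have {}lqG : lek q (g j (G w p)) by move=> a ak; have := lqG a ak; rewrite /G foldl_rcons.
set Gp := G w p in lqG.
have iG : inc Gp by exact: G_inc.
have lpG : lek p Gp by exact: le_G.
have stay : lek q Gp -> reach (w ++ [:: j]) p q.
  by move=> h; apply: reach_cat (IH q ip iq lpq h) _; left.
case: (classic (exists a, [/\ a < k, 0 < j, Gp a = j.-1 & (a.+1 < k -> Gp a.+1 <> j)])) =>
  [[a [ak j0 pa pf]]|nm].
  have eu := g_upd iG ak pa j0 pf.
  case: (leqP (q a) j.-1) => qa.
    apply: stay => b bk; have := lqG b bk; rewrite eu // /upd.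
    by case: (eqVneq b a) => [->|] //; rewrite pa.
  have qaj : q a = j by have := lqG a ak; rewrite eu // /upd eqxx; lia.
  set r := upd q a j.-1.
  have ir : inc r.
    move=> b c bc ck; rewrite /r /upd.
    case: (eqVneq b a) => [eb|ba]; case: (eqVneq c a) => [ca|ca]; try lia.
    + subst b; have := iq _ _ bc ck; lia.
    + subst c; have := iq _ _ bc ck; have := lqG b (ltn_trans bc ck).
      rewrite eu ?(ltn_trans bc ck) // /upd (negbTE ba).
      have := iG b a bc ck; lia.
    + exact: iq.
  have lpr : lek p r.
    move=> b bk; rewrite /r /upd; case: (eqVneq b a) => [->|_]; last exact: lpq.
    by rewrite -pa; exact: lpG.
  have lrG : lek r Gp.
    move=> b bk; rewrite /r /upd; case: (eqVneq b a) => [->|ba]; first by rewrite pa.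
    by have := lqG b bk; rewrite eu // /upd (negbTE ba).
  apply: reach_cat (IH r ip ir lpr lrG) _; right; exists a; split => //.
  - by rewrite /r /upd eqxx.
  - move=> a1k; rewrite /r /upd (_ : a.+1 == a = false) ?eqn_leq ?ltnn ?andbF //.
    by have := iq _ _ (ltnSn a) a1k; lia.
  - move=> b bk; rewrite /r /upd; case: (eqVneq b a) => [->|ba]; first by rewrite ?eqxx qaj.
    by [].
apply: stay => b bk; have := lqG b bk.
suff -> : g j Gp b = Gp b by [].
rewrite /g; case: (boolP [&& _, _, _ & _]) => // /and4P [bk' j0 /eqP pb H].
case: nm; exists b; split => // b1k; move: H; rewrite b1k /= => /eqP; done.
Qed.

Lemma inc_ge p a : inc p -> a < k -> a <= p a.
Proof.
move=> ip; elim: a => [|a IH] ak //.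
have := ip a a.+1 (ltnSn a) ak; have := IH (ltnW ak); lia.
Qed.

Lemma inc_le p m a : inc p -> (forall b, b < k -> p b < m) -> a < k -> p a + (k - a) <= m.
Proof.
move=> ip bd ak.
have H : forall d, a + d < k -> p a + d <= p (a + d).
  elim=> [|d IH] h; first by rewrite !addn0.
  have h' : a + d < k by lia.
  have := IH h'; have := ip (a + d) (a + d.+1) ltac:(lia) h; lia.
have := H (k - a).-1 ltac:(lia); have := bd (a + (k - a).-1) ltac:(lia); lia.
Qed.

Lemma reach_of_sort w m :
  reach w (fun a => a) (fun a => m - k + a) ->
  forall p q, inc p -> inc q -> lek p q -> (forall a, a < k -> q a < m) ->
  reach w p q.
Proof.
move=> Hs p q ip iq lpq bq.
have ib : inc (fun a => a) by move=> a b ab _.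
have l1 := reach_le_G ib Hs.
have l2 : lek (fun a => a) p by move=> a ak; exact: inc_ge.
have l3 := G_mono w ib ip l2.
apply: reach_interval => // a ak.
apply: leq_trans (l3 a ak); apply: leq_trans (l1 a ak).
have := inc_le iq bq ak; lia.
Qed.

End Comb.

Section Sched.
Variable k : nat.
Variables (w : seq nat) (I J : nat -> nat) (T : nat -> nat -> nat).
Hypothesis hI : inc k I.
Hypothesis hJ : inc k J.
Hypothesis hIJ : lek k I J.
Hypothesis s1 : forall a x, a < k -> I a <= x -> x < J a ->
  T a x < size w /\ nth 0 w (T a x) = x.+1.
Hypothesis s2 : forall a x, a < k -> I a <= x -> x.+1 < J a -> T a x < T a x.+1.
Hypothesis s3 : forall a x, a.+1 < k -> I a <= x -> x < J a -> I a.+1 <= x.+1 ->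
  T a.+1 x.+1 < T a x.

Lemma inc_of_succ p : (forall a, a.+1 < k -> p a < p a.+1) -> inc k p.
Proof.
move=> H a b ab bk; elim: b ab bk => [|b IH] // ab bk.
case: (ltngtP a b) => [lt|gt|eq].
- have := IH lt (ltnW bk); have := H b bk; lia.
- lia.
- by subst a; exact: H.
Qed.

Lemma T_mono a x y : a < k -> I a <= x -> x <= y -> y < J a -> T a x <= T a y.
Proof.
move=> ak ix; elim: y => [|y IH] xy yJ.
  by have -> : x = 0 by lia.
case: (ltngtP x y.+1) => [lt|gt|eq]; last by rewrite eq.
- have := IH ltac:(lia) ltac:(lia); have := s2 ak (x:=y) ltac:(lia) yJ; lia.
- lia.
Qed.

Definition cnt t a := \sum_(I a <= x < J a) (T a x < t).
Definition pos t a := I a + cnt t a.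

Lemma cnt_le t a : cnt t a <= J a - I a.
Proof.
rewrite /cnt; apply: (@leq_trans (\sum_(I a <= x < J a) 1)).
  by apply: leq_sum => i _; case: (_ < _).
by rewrite sum_nat_const_nat muln1.
Qed.

Lemma pos_leJ t a : a < k -> pos t a <= J a.
Proof. move=> ak; have := cnt_le t a; have := hIJ ak; rewrite /pos; lia. Qed.

Lemma pos_geI t a : I a <= pos t a.
Proof. by rewrite /pos leq_addr. Qed.

Lemma pos_ge t a x : a < k -> I a <= x -> x < J a -> T a x < t -> x.+1 <= pos t a.
Proof.
move=> ak ix xJ Tt; rewrite /pos /cnt.
rewrite (big_cat_nat (n := x.+1)) //=; last by lia.
apply: (@leq_trans (I a + \sum_(I a <= i < x.+1) 1)).
  by rewrite sum_nat_const_nat muln1; lia.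
rewrite leq_add2l; apply: leq_trans _ (leq_addr _ _).
rewrite big_nat_cond [X in _ <= X]big_nat_cond; apply: leq_sum => i /andP [/andP [h1 h2] _].
have := T_mono ak h1 (x := i) (y := x) ltac:(lia) xJ.
by case: ltnP => //; lia.
Qed.

Lemma pos_le t a x : a < k -> I a <= x -> x < J a -> t <= T a x -> pos t a <= x.
Proof.
move=> ak ix xJ tT; rewrite /pos /cnt.
rewrite (big_cat_nat (n := x)) //=; last by lia.
have -> : \sum_(x <= i < J a) (T a i < t) = 0.
  rewrite big_nat_cond big1 // => i /andP [/andP [h1 h2] _].
  have := T_mono ak ix (x := x) (y := i) h1 h2.
  by case: ltnP => //; lia.
rewrite addn0; apply: (@leq_trans (I a + \sum_(I a <= i < x) 1)).
  rewrite leq_add2l; apply: leq_sum => i _; by case: (_ < _).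
by rewrite sum_nat_const_nat muln1; lia.
Qed.

Lemma pos_at t a x : a < k -> I a <= x -> x < J a -> T a x = t -> pos t a = x.
Proof.
move=> ak ix xJ Tt; apply/eqP; rewrite eqn_leq pos_le ?Tt //=.
case: (ltngtP (I a) x) => [lt|gt|eq]; last by rewrite -eq pos_geI.
- have := pos_ge ak (x := x.-1) (t := t) ltac:(lia) ltac:(lia).
  have := s2 ak (x := x.-1) ltac:(lia) ltac:(lia).
  have -> : x.-1.+1 = x by lia.
  rewrite Tt; lia.
- lia.
Qed.

Lemma pos_inc t : inc k (pos t).
Proof.
apply: inc_of_succ => a a1k.
have ak : a < k by lia.
set y := pos t a.
have Ia := hI (ltnSn a) a1k.
case: (ltngtP (I a) y) => [lt|gt|eq]; last first.
- by rewrite -eq; apply: leq_trans Ia (pos_geI _ _).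
- by have := pos_geI t a; rewrite -/y; lia.
have yJ : y <= J a by exact: pos_leJ.
have Tlt : T a y.-1 < t.
  rewrite ltnNge; apply/negP => h.
  have := pos_le ak (x := y.-1) ltac:(lia) ltac:(lia) h; rewrite -/y; lia.
case: (leqP (I a.+1) y) => h; last by apply: leq_trans h (pos_geI _ _).
have JJ := hJ (ltnSn a) a1k.
have := s3 a1k (x := y.-1) ltac:(lia) ltac:(lia); have -> : y.-1.+1 = y by lia.
move=> h3; have := pos_ge a1k (x := y) (t := t) h ltac:(lia) ltac:(lia); lia.
Qed.

Lemma pos_stay t b : b < k -> (forall x, I b <= x -> x < J b -> T b x <> t) ->
  pos t.+1 b = pos t b.
Proof.
move=> bk H; rewrite /pos /cnt; congr (_ + _).
rewrite big_nat_cond [RHS]big_nat_cond; apply: eq_bigr => i /andP [/andP [h1 h2] _].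
have := H i h1 h2; rewrite ltnS leq_eqVlt; case: eqP => //=.
Qed.

Lemma sched_reach : reach k w I J.
Proof.
have main : forall d t, t + d = size w -> reach k (drop t w) (pos t) J.
  elim=> [|d IH] t htd.
    rewrite addn0 in htd; rewrite htd drop_size /= => a ak.
    apply/eqP; rewrite eqn_leq pos_leJ //=.
    case: (ltngtP (I a) (J a)) => [lt|gt|eq]; last by rewrite -eq pos_geI.
    + have := s1 ak (x := (J a).-1) ltac:(lia) ltac:(lia); case=> hT _.
      have := pos_ge ak (x := (J a).-1) (t := size w) ltac:(lia) ltac:(lia) hT; lia.
    + have := hIJ ak; lia.
  have tw : t < size w by lia.
  rewrite (drop_nth 0 tw) /=.
  have IH' := IH t.+1 ltac:(lia).
  case: (classic (exists a x, [/\ a < k, I a <= x, x < J a & T a x = t])) =>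
    [[a [x [ak ix xJ Tt]]]|none].
  - right; exists a.
    have [_ nt] := s1 ak ix xJ; rewrite Tt in nt.
    have pa := pos_at ak ix xJ Tt.
    split => //; first by rewrite nt.
    + by rewrite nt pa.
    + move=> a1k; rewrite nt.
      have JJ := hJ (ltnSn a) a1k.
      case: (leqP (I a.+1) x.+1) => h; last by have := pos_geI t a.+1; lia.
      have := s3 a1k ix xJ h; rewrite Tt => h3.
      have := pos_ge a1k (x := x.+1) (t := t) h ltac:(lia) h3; lia.
    + apply: reach_ext IH' _ (fun _ _ => erefl) => b bk; rewrite /upd nt.
      case: (eqVneq b a) => [->|ba].
        apply/eqP; rewrite eqn_leq; apply/andP; split.
          case: (ltnP x.+1 (J a)) => h; last by apply: leq_trans (pos_leJ _ ak) h.
          apply: (pos_le ak) => //; first lia.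
          by have := s2 ak ix h; rewrite Tt.
        by apply: pos_ge ak ix xJ _; rewrite Tt.
      apply: pos_stay => // x' ix' xJ' Tx'.
      have [_ nt'] := s1 bk ix' xJ'; rewrite Tx' nt in nt'.
      case: nt' => ex; subst x'.
      have pb := pos_at bk ix' xJ' Tx'.
      have := (@pos_inc t).
      case: (ltngtP a b) => [ab|ba'|e]; last by rewrite e eqxx in ba.
      * by move/(_ a b ab bk); rewrite pa pb ltnn.
      * by move/(_ b a ba' ak); rewrite pa pb ltnn.
  - left; apply: reach_ext IH' _ (fun _ _ => erefl) => b bk.
    apply: pos_stay => // x ix xJ Tx; apply: none; exists b, x; by split.
have := main (size w) 0 (add0n _); rewrite drop0 => H.
apply: reach_ext H _ (fun _ _ => erefl) => a ak.
rewrite /pos /cnt big_nat_cond big1 ?addn0 //.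
Qed.

End Sched.

Local Open Scope nat_scope.

Lemma size_pairs (f g : nat -> nat) s :
  size (flatten [seq [:: f j; g j] | j <- s]) = 2 * size s.
Proof. elim: s => [|j s IH] //=; rewrite IH; lia. Qed.

Lemma nth_pairs_even (f g : nat -> nat) N st q : q < N ->
  nth 0 (flatten [seq [:: f j; g j] | j <- iota st N]) (2 * q) = f (st + q).
Proof.
elim: N st q => [|N IH] st q qN; first by [].
case: q qN => [|q] qN; first by rewrite /= addn0.
rewrite (_ : 2 * q.+1 = (2 * q).+2); last lia.
set i := 2 * q; rewrite /= /i IH ?addSnnS //; lia.
Qed.

Lemma nth_pairs_odd (f g : nat -> nat) N st q : q < N ->
  nth 0 (flatten [seq [:: f j; g j] | j <- iota st N]) (2 * q).+1 = g (st + q).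
Proof.
elim: N st q => [|N IH] st q qN; first by [].
case: q qN => [|q] qN; first by rewrite /= addn0.
rewrite (_ : 2 * q.+1 = (2 * q).+2); last lia.
set i := 2 * q; rewrite /= /i IH ?addSnnS //; lia.
Qed.

Lemma size_flat_nseq R (b : seq nat) : size (flatten (nseq R b)) = R * size b.
Proof. elim: R => [|R IH] //=; rewrite size_cat IH; lia. Qed.

Lemma nth_flat_nseq R (b : seq nat) r i : r < R -> i < size b ->
  nth 0 (flatten (nseq R b)) (r * size b + i) = nth 0 b i.
Proof.
elim: R r => [|R IH] r //= rR ib.
rewrite nth_cat; case: r rR => [|r] rR; first by rewrite mul0n add0n ib.
rewrite mulSn -addnA (_ : size b + _ < size b = false); last lia.
by rewrite (_ : size b + (r * size b + i) - size b = r * size b + i) ?IH //; lia.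
Qed.

Section Block.
Variable n : nat.
Hypothesis hn : 1 <= n.

Lemma size_block : size (sl_block n) = 4 * n - 1.
Proof. rewrite /sl_block !size_cat !size_pairs !size_iota /=; lia. Qed.

Lemma size_slw : size (sl_word n) = (2 * n - 1) * (4 * n - 1).
Proof. by rewrite /sl_word size_flat_nseq size_block. Qed.

Lemma blk1 q : q < n -> nth 0 (sl_block n) (2 * q) = (2 * q).+1.
Proof.
move=> qn; rewrite /sl_block nth_cat size_pairs size_iota (_ : 2 * q < 2 * n) ?nth_pairs_even //; lia.
Qed.

Lemma blk2 q : q < n -> nth 0 (sl_block n) (2 * q).+1 = 4 * n - 2 - 2 * q.
Proof.
move=> qn; rewrite /sl_block nth_cat size_pairs size_iota (_ : (2 * q).+1 < 2 * n) ?nth_pairs_odd //; lia.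
Qed.

Lemma blk3 : nth 0 (sl_block n) (2 * n) = (2 * n).-1.
Proof.
by rewrite /sl_block nth_cat size_pairs size_iota ltnn subnn.
Qed.

Lemma blk4 q : q < n.-1 -> nth 0 (sl_block n) (2 * n + 1 + 2 * q) = (2 * q).+2.
Proof.
move=> qn; rewrite /sl_block nth_cat size_pairs size_iota (_ : 2 * n + 1 + 2 * q < 2 * n = false); last lia.
rewrite (_ : 2 * n + 1 + 2 * q - 2 * n = (2 * q).+1) /=; last lia.
by rewrite nth_pairs_even.
Qed.

Lemma blk5 q : q < n.-1 -> nth 0 (sl_block n) (2 * n + 1 + (2 * q).+1) = 4 * n - 3 - 2 * q.
Proof.
move=> qn; rewrite /sl_block nth_cat size_pairs size_iota (_ : 2 * n + 1 + (2 * q).+1 < 2 * n = false); last lia.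
rewrite (_ : 2 * n + 1 + (2 * q).+1 - 2 * n = (2 * q).+2) /=; last lia.
by rewrite nth_pairs_odd.
Qed.

Lemma nth_slw r i : r < 2 * n - 1 -> i < 4 * n - 1 ->
  nth 0 (sl_word n) (r * (4 * n - 1) + i) = nth 0 (sl_block n) i.
Proof. move=> rR iL; rewrite /sl_word -size_block nth_flat_nseq // size_block //. Qed.

End Block.

Local Open Scope nat_scope.

Lemma idx_lt q q' o o' L : (q < q' /\ o < L) \/ (q = q' /\ o < o') ->
  q * L + o < q' * L + o'.
Proof.
case=> [[qq oL]|[-> oo]]; last by rewrite ltn_add2l.
apply: (@leq_trans (q.+1 * L)); first by rewrite mulSn [L + _]addnC ltn_add2l.
apply: leq_trans (leq_addr _ _); exact: leq_mul.
Qed.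

Section Spec.
Variables n k : nat.
Hypothesis hn : 1 <= n.
Hypothesis hk1 : 1 <= k.
Hypothesis hkm : k <= 4 * n - 1.

Definition big := 2 * n <= k.
Definition eps := if big then k %% 2 else (k - 1) %% 2.
Definition ee a x := x + (eps + k - 1) - 2 * a.
Definition tau a x :=
  if x <= 2 * n - 2 then (if big then (ee a x).-1 else ee a x)
  else (if big then ee a x else (ee a x).-1).
Definition off a x :=
  if tau a x %% 2 == 1 then (if x <= 2 * n - 2 then 2 * n + x else 6 * n - 2 - x)
  else (if x <= 2 * n - 2 then (if big && (x == 2 * n - 2) then 2 * n else x)
        else 4 * n - 2 - x).
Definition T a x := tau a x %/ 2 * (4 * n - 1) + off a x.

Definition valid a x := [/\ a < k, a <= x & x < 4 * n - 1 - k + a].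

Lemma eps_lt : eps < 2.
Proof. rewrite /eps; case: big; lia. Qed.

Lemma ee_succ a x : valid a x -> ee a x.+1 = (ee a x).+1.
Proof. case=> ak ax xJ; rewrite /ee; lia. Qed.

Lemma ee_next a x : valid a x -> a.+1 < k -> ee a.+1 x.+1 = (ee a x).-1 /\ 1 <= ee a x.
Proof. case=> ak ax xJ a1k; rewrite /ee; lia. Qed.

Lemma ee_par a x : valid a x ->
  (big -> ee a x %% 2 = (x + 1) %% 2) /\ (~~ big -> ee a x %% 2 = x %% 2).
Proof.
case=> ak ax xJ; rewrite /ee /eps; split => hb; rewrite ?hb ?(negbTE hb); lia.
Qed.

Lemma ee_range a x : valid a x ->
  (~~ big -> ee a x = 0 -> x <= 2 * n - 2) /\
  (big -> ee a x = 0 -> 2 * n - 2 < x) /\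
  (~~ big -> ee a x = 4 * n - 2 -> 2 * n - 2 < x) /\
  (big -> ee a x = 4 * n - 2 -> x <= 2 * n - 2) /\
  ee a x <= 4 * n - 2.
Proof.
case=> ak ax xJ; rewrite /ee /eps /big.
case: (leqP (2 * n) k) => hb /=; lia.
Qed.

Lemma tau_cases a x :
  [\/ [/\ x <= 2 * n - 2, ~~ big & tau a x = ee a x],
      [/\ x <= 2 * n - 2, big & tau a x = (ee a x).-1],
      [/\ 2 * n - 2 < x, big & tau a x = ee a x] |
      [/\ 2 * n - 2 < x, ~~ big & tau a x = (ee a x).-1]].
Proof.
rewrite /tau; case: (leqP x (2 * n - 2)) => h; case: (boolP big) => hb.
- by apply: Or42.
- by apply: Or41.
- by apply: Or43.
- by apply: Or44.
Qed.

Lemma tau_par a x : valid a x ->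
  (x <= 2 * n - 2 -> tau a x %% 2 = x %% 2) /\
  (2 * n - 2 < x -> tau a x %% 2 = (x + 1) %% 2) /\ tau a x <= 4 * n - 3.
Proof.
move=> v; have [p1 p2] := ee_par v.
have [r1 [r2 [r3 [r4 r5]]]] := ee_range v.
case: (tau_cases a x) => [[h hb ->]|[h hb ->]|[h hb ->]|[h hb ->]].
- have := p2 hb; have := r1 hb; have := r3 hb; lia.
- have := p1 hb; have := r2 hb; have := r4 hb; lia.
- have := p1 hb; have := r2 hb; have := r4 hb; lia.
- have := p2 hb; have := r1 hb; have := r3 hb; lia.
Qed.

Lemma off_range a x : valid a x ->
  (tau a x %% 2 = 0 -> off a x <= 2 * n) /\
  (tau a x %% 2 = 1 -> 2 * n + 1 <= off a x /\ off a x <= 4 * n - 2).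
Proof.
move=> v; have [t1 [t2 t3]] := tau_par v; have [ak ax xJ] := v.
rewrite /off; split => h3.
  rewrite h3 /=; case: (leqP x (2 * n - 2)) => h2; last lia.
  case: (_ && _); lia.
rewrite h3 eqxx; case: (leqP x (2 * n - 2)) => h2.
  have := t1 h2; lia.
have := t2 h2; lia.
Qed.

Lemma T_lt a x a' x' : valid a x -> valid a' x' ->
  (tau a x < tau a' x' \/ (tau a x = tau a' x' /\ off a x < off a' x')) ->
  T a x < T a' x'.
Proof.
move=> v v' H; have [o1 o2] := off_range v; have [o1' o2'] := off_range v'.
rewrite /T; apply: idx_lt.
set t := tau a x in H o1 o2 *; set t' := tau a' x' in H o1' o2' *.
set o := off a x in H o1 o2 *; set o' := off a' x' in H o1' o2' *.
case: H => [lt|[eq lt]]; last by right; split => //; rewrite eq.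
have [to|te] : t %% 2 = 1 \/ t %% 2 = 0 by lia.
- have := o2 to; lia.
- have := o1 te.
  have [to'|te'] : t' %% 2 = 1 \/ t' %% 2 = 0 by lia.
  + have := o2' to'; lia.
  + lia.
Qed.


Lemma off_A_left a x : tau a x %% 2 = 0 -> x <= 2 * n - 2 ->
  ~~ (big && (x == 2 * n - 2)) -> off a x = x.
Proof. by move=> h1 h2 h3; rewrite /off h1 /= h2 (negbTE h3). Qed.

Lemma off_A_dup a x : tau a x %% 2 = 0 -> big -> x = 2 * n - 2 -> off a x = 2 * n.
Proof. by move=> h1 h2 h3; rewrite /off h1 /= h3 leqnn h2 eqxx. Qed.

Lemma off_A_right a x : tau a x %% 2 = 0 -> 2 * n - 2 < x -> off a x = 4 * n - 2 - x.
Proof. by move=> h1 h2; rewrite /off h1 /= leqNgt h2. Qed.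

Lemma off_B_left a x : tau a x %% 2 = 1 -> x <= 2 * n - 2 -> off a x = 2 * n + x.
Proof. by move=> h1 h2; rewrite /off h1 /= h2. Qed.

Lemma off_B_right a x : tau a x %% 2 = 1 -> 2 * n - 2 < x -> off a x = 6 * n - 2 - x.
Proof. by move=> h1 h2; rewrite /off h1 /= leqNgt h2. Qed.

Lemma tau_M1 a x : ~~ big -> tau a x = (if x <= 2 * n - 2 then ee a x else (ee a x).-1).
Proof. by move=> hb; rewrite /tau (negbTE hb); case: ifP. Qed.

Lemma tau_M2 a x : big -> tau a x = (if x <= 2 * n - 2 then (ee a x).-1 else ee a x).
Proof. by move=> hb; rewrite /tau hb; case: ifP. Qed.

Lemma s2_ok a x : valid a x -> x.+1 < 4 * n - 1 - k + a -> T a x < T a x.+1.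
Proof.
move=> v xJ; have v' : valid a x.+1 by case: v => ak ax _; split => //; lia.
apply: (T_lt v v').
have es := ee_succ v.
have [p1 [p2 _]] := tau_par v.
have [p1' [p2' _]] := tau_par v'.
have [r1 [r2 [r3 [r4 r5]]]] := ee_range v.
case: (boolP big) => hb.
- rewrite !tau_M2 // es; move: (r2 hb) => {r1 r2 r3 r4 r5} r.
  case: ifP => h; case: ifP => h'; left; lia.
- rewrite !tau_M1 // es; move: (r1 hb) => {r1 r2 r3 r4 r5} r.
  case: ifP => h; case: ifP => h'; try (left; lia).
  right; split; first lia.
  have ex : x = 2 * n - 2 by lia.
  have tx : tau a x %% 2 = 0 by rewrite p1 // ex; lia.
  have tx' : tau a x.+1 %% 2 = 0 by rewrite p2' ?ex; lia.
  rewrite off_A_left // ?off_A_right //; first lia.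
  - lia.
  - by rewrite (negbTE hb).
Qed.

Lemma s3_ok a x : valid a x -> a.+1 < k -> T a.+1 x.+1 < T a x.
Proof.
move=> v a1k; have v' : valid a.+1 x.+1 by case: v => ak ax xJ; split => //; lia.
apply: (T_lt v' v).
have [en e1] := ee_next v a1k.
have [p1 [p2 _]] := tau_par v.
have [p1' [p2' _]] := tau_par v'.
have [r1 [r2 [r3 [r4 r5]]]] := ee_range v'.
rewrite en in r1 r2 r3 r4 r5.
case: (boolP big) => hb.
- rewrite !tau_M2 // en; move: (r2 hb) => {r1 r2 r3 r4 r5} r.
  case: ifP => h'; case: ifP => h; try (left; lia).
  right; split; first lia.
  have ex : x = 2 * n - 2 by lia.
  have tx : tau a x %% 2 = 0 by rewrite p1 // ex; lia.
  have tx' : tau a.+1 x.+1 %% 2 = 0 by rewrite p2' ?ex; lia.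
  rewrite (off_A_right tx'); last lia.
  rewrite (off_A_dup tx hb ex); lia.
- rewrite !tau_M1 // en; move: (r1 hb) => {r1 r2 r3 r4 r5} r.
  case: ifP => h'; case: ifP => h; left; lia.
Qed.

Lemma s1_ok a x : valid a x ->
  T a x < size (sl_word n) /\ nth 0 (sl_word n) (T a x) = x.+1.
Proof.
move=> v; have [t1 [t2 t3]] := tau_par v; have [o1 o2] := off_range v.
have [ak ax xJ] := v.
have oL : off a x < 4 * n - 1.
  have [h|h] : tau a x %% 2 = 0 \/ tau a x %% 2 = 1 by lia.
  - have := o1 h; lia.
  - have := o2 h; lia.
rewrite size_slw //; split.
  rewrite /T -[X in _ < X]addn0; apply: idx_lt; left; split => //.
  have := leq_div2r 2 t3; rewrite (_ : (4 * n - 3) %/ 2 = 2 * n - 2); lia.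
rewrite /T nth_slw //; last first.
  have := leq_div2r 2 t3; rewrite (_ : (4 * n - 3) %/ 2 = 2 * n - 2); lia.
have [h|h] : tau a x %% 2 = 0 \/ tau a x %% 2 = 1 by lia.
- case: (leqP x (2 * n - 2)) => hx.
  + case: (boolP (big && (x == 2 * n - 2))) => hd.
      have [hb /eqP ex] := andP hd.
      rewrite (off_A_dup h hb ex) blk3; lia.
    rewrite (off_A_left h hx hd).
    have [q hq] : exists q, x = 2 * q by exists (x %/ 2); have := t1 hx; lia.
    by rewrite hq blk1 //; lia.
  + rewrite (off_A_right h hx).
    have [q hq] : exists q, x = (2 * q).+1 by exists (x %/ 2); have := t2 hx; lia.
    rewrite (_ : 4 * n - 2 - x = (2 * (2 * n - 2 - q)).+1); last lia.
    rewrite blk2; lia.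
- case: (leqP x (2 * n - 2)) => hx.
  + rewrite (off_B_left h hx).
    have [q hq] : exists q, x = (2 * q).+1 by exists (x %/ 2); have := t1 hx; lia.
    rewrite (_ : 2 * n + x = 2 * n + 1 + 2 * q); last lia.
    rewrite blk4; lia.
  + rewrite (off_B_right h hx).
    have [q hq] : exists q, x = 2 * q by exists (x %/ 2); have := t2 hx; lia.
    rewrite (_ : 6 * n - 2 - x = 2 * n + 1 + (2 * (2 * n - 2 - q)).+1); last lia.
    rewrite blk5; lia.
Qed.

Lemma packed_reach : reach k (sl_word n) (fun a => a) (fun a => 4 * n - 1 - k + a).
Proof.
apply: (@sched_reach k (sl_word n) _ _ T).
- by move=> a b ab bk.
- move=> a b ab bk; lia.
- move=> a ak; lia.
- move=> a x ak ax xJ; apply: s1_ok; split => //.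
- move=> a x ak ax xJ; apply: s2_ok; first split => //; lia.
- move=> a x a1k ax xJ _; apply: s3_ok => //; split => //; lia.
Qed.

End Spec.

Local Open Scope ring_scope.

Section Mat.
Variable R : realType.
Variable m : nat.
Variable i0 : 'I_m.

Notation EE := (@E R m).

Lemma EE_entry i j (r c : 'I_m) : EE i j r c = ((val r == i.-1) && (val c == j.-1))%:R.
Proof. by rewrite mxE. Qed.

Lemma E_mul i j k l : (j.-1 < m)%N ->
  EE i j *m EE k l = if j.-1 == k.-1 then EE i l else 0.
Proof.
move=> jm; apply/matrixP => r c; rewrite !mxE.
rewrite (bigD1 (insubd i0 j.-1)) //= big1 ?addr0.
  rewrite !mxE val_insubd jm eqxx andbT.
  case: (boolP (j.-1 == k.-1)) => h /=; rewrite !mxE ?andFb ?mulr0 //=.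
  by rewrite -natrM mulnb.
move=> s ns; rewrite !mxE.
case: (eqVneq (val s) j.-1) => [es|]; last by rewrite andbF mul0r.
by case/eqP: ns; apply: val_inj; rewrite val_insubd jm.
Qed.

Lemma mxpow0 (A : 'M[R]_m) : mxpow A 0 = 1%:M. Proof. by []. Qed.
Lemma mxpowS (A : 'M[R]_m) k : mxpow A k.+1 = A *m mxpow A k. Proof. by []. Qed.

Lemma expm_split (A : 'M[R]_m) : (2 < m)%N -> (forall k, (3 <= k)%N -> mxpow A k = 0) ->
  expm A = 1%:M + A + 2%:R^-1 *: (A *m A).
Proof.
move=> m2 h; rewrite /expm -(big_mkord xpredT (fun k => (k`!%:R)^-1 *: mxpow A k)).
rewrite big_ltn ?(ltn_trans _ m2) // big_ltn ?(ltn_trans _ m2) //.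
rewrite big_ltn // big_nat_cond big1 ?addr0.
  by rewrite /mxpow /= !mulmx1 (_ : 0`! = 1%N) // (_ : 1`! = 1%N) // (_ : 2`! = 2%N) // invr1 !scale1r addrA.
by move=> i /andP [/andP [hi _] _]; rewrite h // scaler0.
Qed.

Lemma mxpow_sq0 (A : 'M[R]_m) k : A *m A = 0 -> (2 <= k)%N -> mxpow A k = 0.
Proof.
move=> h; case: k => [|[|k]] // _.
by rewrite !mxpowS mulmxA h mul0mx.
Qed.

Lemma expm_sq0 (A : 'M[R]_m) : (2 < m)%N -> A *m A = 0 -> expm A = 1%:M + A.
Proof.
move=> m2 h; rewrite expm_split //; first by rewrite h scaler0 addr0.
by move=> k k3; apply: mxpow_sq0 => //; apply: ltnW.
Qed.

Lemma expm_cube0 (A : 'M[R]_m) : (2 < m)%N -> A *m (A *m A) = 0 ->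
  expm A = 1%:M + A + 2%:R^-1 *: (A *m A).
Proof.
move=> m2 h; apply: expm_split => // k; case: k => [|[|[|k]]] // _.
by rewrite !mxpowS !mulmxA -(mulmxA A A A) h mul0mx.
Qed.

Definition ord_of (x : nat) : 'I_m := insubd i0 x.

Lemma val_ord_of x : (x < m)%N -> val (ord_of x) = x.
Proof. by move=> xm; rewrite /ord_of val_insubd xm. Qed.

Fact sub_key : unit. Proof. exact: tt. Qed.
Definition sub k (M : 'M[R]_m) (p q : nat -> nat) : 'M[R]_k :=
  locked_with sub_key (\matrix_(a < k, b < k) M (ord_of (p a)) (ord_of (q b))).
Definition minor k (M : 'M[R]_m) (p q : nat -> nat) : R := \det (sub k M p q).
Lemma subE k M p q (a b : 'I_k) : sub k M p q a b = M (ord_of (p a)) (ord_of (q b)).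
Proof. by rewrite /sub unlock mxE. Qed.

Definition xm j (u : R) : 'M[R]_m := 1%:M + u *: EE j j.+1.

Definition bnd k (p : nat -> nat) := forall a, (a < k)%N -> (p a < m)%N.

Lemma xm_entry (M : 'M[R]_m) j u r c : (0 < j)%N -> (j < m)%N ->
  (xm j u *m M) r c = M r c + (if val r == j.-1 then u * M (ord_of j) c else 0).
Proof.
move=> j0 jm; rewrite mulmxDl mul1mx -scalemxAl mxE [in X in _ + X]mxE; congr (_ + _).
rewrite mxE (bigD1 (ord_of j)) //= big1 ?addr0.
  rewrite !mxE val_ord_of // eqxx andbT /=.
  by case: (val r == j.-1); rewrite ?mul1r ?mul0r ?mulr0.
move=> s ns; rewrite !mxE /=.
case: (eqVneq (val s) j) => [es|]; last by rewrite andbF mul0r.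
by case/eqP: ns; apply: val_inj; rewrite val_ord_of.
Qed.

Lemma det_row0 k (A : 'M[R]_k) (i : 'I_k) : (forall j, A i j = 0) -> \det A = 0.
Proof. by move=> h; rewrite (expand_det_row A i) big1 // => j _; rewrite h mul0r. Qed.

Lemma inc_inj k p a b : inc k p -> (a < k)%N -> (b < k)%N -> p a = p b -> a = b.
Proof.
move=> ip ak bk e; case: (ltngtP a b) => [ab|ba|//].
- by have := ip _ _ ab bk; rewrite e ltnn.
- by have := ip _ _ ba ak; rewrite e ltnn.
Qed.

Lemma minor_stepA k (M : 'M[R]_m) j u p q a0 : (0 < j)%N -> (j < m)%N ->
  inc k p -> bnd k p -> (a0 < k)%N -> p a0 = j.-1 ->
  minor k (xm j u *m M) p q = minor k M p q + u * minor k M (upd p a0 j) q.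
Proof.
move=> j0 jm ip bp a0k pa0.
rewrite -[minor k M p q]mul1r.
apply: (determinant_multilinear (i0 := Ordinal a0k)).
- apply/rowP => b; rewrite !mxE !subE xm_entry // val_ord_of ?bp // pa0 eqxx.
  by rewrite /upd eqxx mul1r.
- apply/matrixP => r c; rewrite !mxE !subE xm_entry //.
  case: (eqVneq (val (ord_of (p (lift (Ordinal a0k) r)))) j.-1) => [h|h]; last by rewrite addr0.
  exfalso; move: h; rewrite val_ord_of ?bp // -pa0 => h.
  have := inc_inj ip (ltn_ord _) a0k h => e.
  have := neq_lift (Ordinal a0k) r; rewrite eq_sym => /eqP; apply; apply: val_inj.
  exact: e.
- apply/matrixP => r c; rewrite !mxE !subE xm_entry //.
  have ne : val (lift (Ordinal a0k) r) != a0.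
    have := neq_lift (Ordinal a0k) r; rewrite eq_sym => h; apply/eqP => e.
    by move/eqP: h; apply; apply: val_inj.
  rewrite /upd (negbTE ne).
  case: (eqVneq (val (ord_of (p (lift (Ordinal a0k) r)))) j.-1) => [h|h]; last by rewrite addr0.
  exfalso; move: h; rewrite val_ord_of ?bp // -pa0 => h.
  by have := inc_inj ip (ltn_ord _) a0k h => e; move: ne; rewrite -[X in X != _]/(nat_of_ord _) e eqxx.
Qed.

Lemma minor_stepB k (M : 'M[R]_m) j u p q : (0 < j)%N -> (j < m)%N -> bnd k p ->
  (forall a, (a < k)%N -> p a != j.-1) ->
  minor k (xm j u *m M) p q = minor k M p q.
Proof.
move=> j0 jm bp h; rewrite /minor; congr (\det _); apply/matrixP => r c.
by rewrite !subE xm_entry // val_ord_of ?bp // (negbTE (h _ (ltn_ord r))) addr0.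
Qed.

Lemma minor_dup k (M : 'M[R]_m) p q a0 : (a0.+1 < k)%N -> p a0 = p a0.+1 ->
  minor k M p q = 0.
Proof.
move=> a1k e; have a0k : (a0 < k)%N by apply: ltnW.
apply: (determinant_alternate (i1 := Ordinal a0k) (i2 := Ordinal a1k)).
  by apply/eqP => /(congr1 val) /= /eqP; rewrite eqn_leq ltnn andbF.
by move=> c; rewrite !subE /= e.
Qed.

Lemma minor1_eq k p q : bnd k p -> inc k p -> eqk k p q -> minor k 1%:M p q = 1.
Proof.
move=> bp ip e; rewrite /minor (_ : sub k 1%:M p q = 1%:M) ?det1 //.
apply/matrixP => a b; rewrite subE !mxE; congr (_%:R).
rewrite -val_eqE /= -(e b (ltn_ord b)) !val_ord_of ?bp //.
case: (eqVneq a b) => [->|nab]; first by rewrite !eqxx.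
have : p a != p b.
  apply/eqP => h; case/eqP: nab.
  by apply: val_inj; apply: (inc_inj ip (ltn_ord _) (ltn_ord _) h).
by move/negbTE ->.
Qed.

Lemma minor1_ge0 k p q : bnd k p -> bnd k q -> inc k p -> inc k q ->
  0 <= minor k 1%:M p q.
Proof.
move=> bp bq ip iq.
case: (boolP [exists a : 'I_k, p a != q a]) => [ex|]; last first.
  rewrite negb_exists => /forallP h.
  rewrite minor1_eq // ?ler01 // => a ak.
  by have := h (Ordinal ak); rewrite negbK => /eqP.
have exn : exists a, (a < k)%N && (p a != q a).
  by case/existsP: ex => a h; exists a; rewrite ltn_ord.
case: (ex_minnP exn) => a0 /andP [a0k ne] mn.
have same : forall b, (b < a0)%N -> p b = q b.
  move=> b ba; apply/eqP; case: (boolP (p b == q b)) => // nb.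
  have := mn b; rewrite nb andbT (ltn_trans ba a0k) => /(_ isT); lia.
rewrite /minor; case: (ltngtP (p a0) (q a0)) => [lt|gt|eq]; last by rewrite eq eqxx in ne.
- rewrite (det_row0 (i := Ordinal a0k)) // => b; rewrite subE !mxE.
  rewrite -val_eqE /= !val_ord_of ?bp ?bq //.
  case: (ltnP b a0) => ba.
    rewrite -(same _ ba); have := ip _ _ ba a0k.
    by case: eqP => // ->; rewrite ltnn.
  have : (q a0 <= q b)%N.
    case: (ltnP a0 b) => [ab|ba']; first by apply: ltnW; apply: iq.
    by have e : (b : nat) = a0 := ltac:(lia); rewrite e.
  by case: eqP => // h hq; lia.
- rewrite -det_tr (det_row0 (i := Ordinal a0k)) // => b; rewrite !mxE subE !mxE.
  rewrite -val_eqE /= !val_ord_of ?bp ?bq //.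
  case: (ltnP b a0) => ba.
    rewrite (same _ ba); have := iq _ _ ba a0k.
    by case: eqP => // ->; rewrite ltnn.
  have : (p a0 <= p b)%N.
    case: (ltnP a0 b) => [ab|ba']; first by apply: ltnW; apply: ip.
    by have e : (b : nat) = a0 := ltac:(lia); rewrite e.
  by case: eqP => // h hq; lia.
Qed.

Definition prodx (w : seq nat) (us : seq R) : 'M[R]_m :=
  foldr (fun pr M => xm pr.1 pr.2 *m M) 1%:M (zip w us).

Lemma upd_bnd k p a j : bnd k p -> (j < m)%N -> bnd k (upd p a j).
Proof. by move=> bp jm b bk; rewrite /upd; case: eqP => // _; exact: bp. Qed.

Lemma second_ge0 k (M : 'M[R]_m) p q a0 j :
  (forall p', inc k p' -> bnd k p' -> 0 <= minor k M p' q) ->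
  inc k p -> (a0 < k)%N -> p a0 = j.-1 -> (0 < j)%N -> (j < m)%N -> bnd k p ->
  0 <= minor k M (upd p a0 j) q.
Proof.
move=> H ip a0k pa j0 jm bp.
case: (boolP ((a0.+1 < k)%N && (p a0.+1 == j))) => [/andP [a1k /eqP pj]|h].
  rewrite (@minor_dup k M (upd p a0 j) q a0 a1k) //.
  by rewrite /upd eqxx (_ : a0.+1 == a0 = false) //; apply/eqP; lia.
apply: H; last exact: upd_bnd.
apply: upd_inc => // a1k ej; move: h; rewrite a1k ej eqxx.
done.
Qed.

Lemma prodx_TNN k w us : all (fun j => (0 < j)%N && (j < m)%N) w ->
  all (fun u => 0 < u) us -> size us = size w ->
  forall p q, inc k p -> inc k q -> bnd k p -> bnd k q ->
  0 <= minor k (prodx w us) p q.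
Proof.
elim: w us => [|j w IH] [|u us] //= hw hu hs p q ip iq bp bq.
  exact: minor1_ge0.
case/andP: hw => /andP [j0 jm] hw; case/andP: hu => u0 hu.
have IH' := IH us hw hu (eq_add_S _ _ hs).
case: (classic (exists a0, (a0 < k)%N /\ p a0 = j.-1)) => [[a0 [a0k pa]]|none].
  rewrite (minor_stepA _ _ _ j0 jm ip bp a0k pa).
  apply: addr_ge0; first exact: IH'.
  apply: mulr_ge0; first exact: ltW.
  by apply: second_ge0 => // p' ip' bp'; exact: IH'.
rewrite minor_stepB //; first exact: IH'.
by move=> a ak; apply/eqP => e; apply: none; exists a.
Qed.

Lemma prodx_POS k w us : all (fun j => (0 < j)%N && (j < m)%N) w ->
  all (fun u => 0 < u) us -> size us = size w ->
  forall p q, inc k p -> inc k q -> bnd k p -> bnd k q -> reach k w p q ->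
  0 < minor k (prodx w us) p q.
Proof.
elim: w us => [|j w IH] [|u us] //= hw hu hs p q ip iq bp bq.
  by move=> e; rewrite minor1_eq // ltr01.
case/andP: hw => /andP [j0 jm] hw; case/andP: hu => u0 hu.
have hs' := eq_add_S _ _ hs.
have IH' := IH us hw hu hs'.
have TN := prodx_TNN hw hu hs'.
case=> [Hr|[a0 [a0k _ pa pf Hr]]].
  case: (classic (exists a0, (a0 < k)%N /\ p a0 = j.-1)) => [[a0 [a0k pa]]|none].
    rewrite (minor_stepA _ _ _ j0 jm ip bp a0k pa).
    apply: ltr_wpDr; last exact: IH'.
    apply: mulr_ge0; first exact: ltW.
    by apply: second_ge0 => // p' ip' bp'; exact: TN.
  rewrite minor_stepB //; first exact: IH'.
  by move=> a ak; apply/eqP => e; apply: none; exists a.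
rewrite (minor_stepA _ _ _ j0 jm ip bp a0k pa).
apply: ltr_wpDl; first exact: TN.
apply: mulr_gt0 => //; apply: IH' => //; last exact: upd_bnd.
exact: upd_inc.
Qed.

Lemma prodx_upper w us : all (fun j => (0 < j)%N && (j < m)%N) w -> size us = size w ->
  forall r c : 'I_m, (c < r)%N -> prodx w us r c = 0.
Proof.
elim: w us => [|j w IH] [|u us] //= hw hs r c cr.
  by rewrite mxE; case: eqP => // e; rewrite e ltnn in cr.
case/andP: hw => /andP [j0 jm] hw.
rewrite xm_entry // IH // ?add0r ?(eq_add_S _ _ hs) //.
case: eqP => // rj; rewrite IH ?mulr0 // ?(eq_add_S _ _ hs) //.
move: rj => /= rj; rewrite /= val_ord_of //; lia.
Qed.

End Mat.

Local Open Scope ring_scope.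

Section Part1.
Variable R : realType.
Variable m : nat.
Hypothesis m2 : (2 < m)%N.

Lemma sc_mul (A B : 'M[R]_m) (t s : R) : (t *: A) *m (s *: B) = (t * s) *: (A *m B).
Proof. by rewrite -scalemxAl -scalemxAr scalerA. Qed.

Lemma two_factor (A B : 'M[R]_m) t : A *m A = 0 -> B *m B = 0 -> A *m B = 0 -> B *m A = 0 ->
  expm (t *: (A + B)) = expm (t *: A) *m (expm (t *: B) *m 1%:M).
Proof.
move=> AA BB AB BA.
have h1 : (t *: A) *m (t *: A) = 0 by rewrite sc_mul AA scaler0.
have h2 : (t *: B) *m (t *: B) = 0 by rewrite sc_mul BB scaler0.
have h3 : (t *: (A + B)) *m (t *: (A + B)) = 0.
  by rewrite sc_mul mulmxDl !mulmxDr AA AB BA BB !addr0 scaler0.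
rewrite (expm_sq0 m2 h1) (expm_sq0 m2 h2) (expm_sq0 m2 h3).
rewrite mulmx1 mulmxDl mul1mx mulmxDr mulmx1 sc_mul AB scaler0 addr0.
apply/matrixP => i j; rewrite !mxE; ring.
Qed.

Lemma three_factor (A B : 'M[R]_m) t : A *m A = 0 -> B *m B = 0 -> B *m A = 0 ->
  expm (t *: (A + B)) =
  expm ((t / 2%:R) *: A) *m (expm (t *: B) *m (expm ((t / 2%:R) *: A) *m 1%:M)).
Proof.
move=> AA BB BA.
have XX : (A + B) *m (A + B) = A *m B by rewrite mulmxDl !mulmxDr AA BA BB add0r !addr0.
have h1 : (t *: (A + B)) *m ((t *: (A + B)) *m (t *: (A + B))) = 0.
  by rewrite !sc_mul XX mulmxDl !mulmxA AA BA !mul0mx addr0 scaler0.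
have h2 : ((t / 2%:R) *: A) *m ((t / 2%:R) *: A) = 0 by rewrite sc_mul AA scaler0.
have h3 : (t *: B) *m (t *: B) = 0 by rewrite sc_mul BB scaler0.
rewrite (expm_cube0 m2 h1) (expm_sq0 m2 h2) (expm_sq0 m2 h3).
rewrite mulmx1 !(mulmxDl, mulmxDr, mul1mx, mulmx1, sc_mul).
rewrite ?mulmxA ?BA ?AA ?BB ?mul0mx ?mulmx0 ?scaler0 ?addr0 ?add0r.
rewrite -[A *m B *m A]mulmxA BA mulmx0 scaler0 addr0.
apply/matrixP => i j; rewrite !mxE; field; rewrite ?pnatr_eq0 ?oner_eq0 //.
Qed.

End Part1.

Lemma reach_k0 w p q : reach 0 w p q.
Proof. by elim: w => [|j w IH] //=; left. Qed.

Lemma sl_reach n k p q : (1 <= n)%N -> inc k p -> inc k q -> lek k p q ->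
  (forall a, (a < k)%N -> (q a < 4 * n - 1)%N) -> reach k (sl_word n) p q.
Proof.
move=> hn ip iq lpq bq.
case: k ip iq lpq bq => [|k] ip iq lpq bq; first exact: reach_k0.
case: (leqP k.+1 (4 * n - 1)) => hk.
  apply: (reach_of_sort (m := 4 * n - 1)) => //.
  exact: packed_reach.
have := inc_ge iq (ltnSn k); have := bq k (ltnSn k); lia.
Qed.

Local Open Scope nat_scope.

Lemma all_pairs (P : pred nat) (f g : nat -> nat) s :
  (forall k, k \in s -> P (f k) && P (g k)) -> all P (flatten [seq [:: f k; g k] | k <- s]).
Proof.
elim: s => [|k s IH] //= H.
have /andP [h1 h2] := H k (mem_head _ _).
by rewrite h1 h2 /= IH // => j js; apply: H; rewrite in_cons js orbT.
Qed.

Lemma all_flat_nseq (P : pred nat) R b : all P b -> all P (flatten (nseq R b)).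
Proof. by move=> h; elim: R => [|R IH] //=; rewrite all_cat h IH. Qed.

Section Words2.
Variable n : nat.
Hypothesis hn : 1 <= n.

Lemma sl_range : all (fun j => (0 < j) && (j < 4 * n - 1)) (sl_word n).
Proof.
apply: all_flat_nseq; rewrite /sl_block !all_cat; apply/and3P; split.
- by apply: all_pairs => k; rewrite mem_iota => /andP [_ kn]; apply/andP; split; apply/andP; split; lia.
- by rewrite /= andbT; apply/andP; split; lia.
- by apply: all_pairs => k; rewrite mem_iota => /andP [_ kn]; apply/andP; split; apply/andP; split; lia.
Qed.

Definition sl_of (i : nat) : seq nat :=
  if i == 2 * n - 1 then [:: 2 * n - 1; 2 * n; 2 * n - 1] else [:: i; 4 * n - 1 - i].

Lemma flat_map_nseq (f : nat -> seq nat) R b :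
  flatten (map f (flatten (nseq R b))) = flatten (nseq R (flatten (map f b))).
Proof. by elim: R => [|R IH] //=; rewrite map_cat flatten_cat IH. Qed.

Lemma flat_so : flatten (map sl_of (so_word n)) = sl_word n.
Proof.
rewrite /so_word /sl_word flat_map_nseq; congr (flatten (nseq _ _)).
rewrite /so_block /sl_block map_cat flatten_cat.
have iotan : iota 0 n = iota 0 n.-1 ++ [:: n.-1].
  by rewrite -[in LHS](prednK hn) -addn1 iotaD.
have E1 : flatten [seq sl_of i | i <- [seq (2 * k).+1 | k <- iota 0 n.-1]] =
          flatten [seq [:: (2 * k).+1; 4 * n - 2 - 2 * k] | k <- iota 0 n.-1].
  rewrite -map_comp; congr (flatten _); apply/eq_in_map => k; rewrite mem_iota => /andP [_ kn].
  rewrite /= /sl_of ifF; last by apply/eqP; lia.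
  congr [:: _; _]; lia.
have E2 : sl_of (2 * n.-1).+1 = [:: (2 * n.-1).+1; 4 * n - 2 - 2 * n.-1] ++ [:: (2 * n).-1].
  rewrite /sl_of ifT; last by apply/eqP; lia.
  rewrite /=; congr [:: _, _ & _]; try lia; congr [:: _]; lia.
have E3 : flatten [seq sl_of i | i <- [seq (2 * k).+2 | k <- iota 0 n.-1]] =
          flatten [seq [:: (2 * k).+2; 4 * n - 3 - 2 * k] | k <- iota 0 n.-1].
  rewrite -map_comp; congr (flatten _); apply/eq_in_map => k; rewrite mem_iota => /andP [_ kn].
  rewrite /= /sl_of ifF; last by apply/eqP; lia.
  congr [:: _; _]; lia.
rewrite E3 iotan !map_cat !flatten_cat E1 /= cats0 E2 !catA.
by rewrite -!catA.
Qed.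

Lemma so_range : all (fun i => (0 < i) && (i <= 2 * n - 1)) (so_word n).
Proof.
apply: all_flat_nseq; rewrite /so_block all_cat; apply/andP; split;
  apply/allP => x /mapP [k]; rewrite mem_iota => /andP [_ kn] ->; apply/andP; split; lia.
Qed.

End Words2.

Section Main.
Variable R : realType.
Variable n : nat.
Hypothesis hn : (1 <= n)%N.
Local Open Scope ring_scope.

Lemma dim2 : (2 < dim n)%N.
Proof. rewrite /dim; lia. Qed.

Definition i0n : 'I_(dim n) := Ordinal (ltnW (ltnW dim2)).

Lemma Emul (i j k l : nat) : (j.-1 < dim n)%N ->
  @E R (dim n) i j *m @E R (dim n) k l = if j.-1 == k.-1 then E R (dim n) i l else 0.
Proof. exact: (@E_mul R (dim n) i0n i j k l). Qed.

Lemma Xsl_exp j (u : R) : (0 < j)%N -> (j < dim n)%N -> expm (u *: Xsl R n j) = xm (dim n) j u.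
Proof.
move=> j0 jm; rewrite /Xsl /xm (expm_sq0 dim2) //.
rewrite sc_mul Emul // ifF ?scaler0 //; apply/eqP; lia.
Qed.

Lemma word_prod_Xsl w (us : seq R) : all (fun j => (0 < j) && (j < dim n))%N w ->
  size us = size w -> word_prod (@Xsl R n) w us = prodx (dim n) w us.
Proof.
elim: w us => [|j w IH] [|u us] //= hw hs.
case/andP: hw => /andP [j0 jm] hw.
by rewrite /word_prod /= Xsl_exp // -/(word_prod _ _ _) IH //; case: hs.
Qed.

Lemma word_prod_cat (X : nat -> 'M[R]_(dim n)) w1 w2 t1 t2 : size t1 = size w1 ->
  word_prod X (w1 ++ w2) (t1 ++ t2) = word_prod X w1 t1 *m word_prod X w2 t2.
Proof.
elim: w1 t1 => [|j w IH] [|t t1] //= hs; first by rewrite /word_prod /= mul1mx.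
by rewrite /word_prod /= -mulmxA -/(word_prod _ _ _) IH //; case: hs.
Qed.

Definition us_of (i : nat) (t : R) : seq R :=
  if i == (2 * n - 1)%N then [:: t / 2%:R; t; t / 2%:R] else [:: t; t].

Lemma expm_Xso i (t : R) : (0 < i)%N -> (i <= 2 * n - 1)%N ->
  expm (t *: Xso R n i) = word_prod (@Xsl R n) (sl_of n i) (us_of i t).
Proof.
move=> i0 i2; rewrite /sl_of /us_of /Xso /Xsl /word_prod /=.
case: eqP => [ei|ni] /=.
  rewrite ei (_ : (2 * n - 1).+1 = 2 * n)%N; last lia.
  rewrite (_ : (4 * n - 1 - (2 * n - 1)) = 2 * n)%N; last lia.
  rewrite (_ : (4 * n - (2 * n - 1)) = (2 * n).+1)%N; last lia.
  apply: (three_factor dim2).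
  - rewrite Emul ?ifF //; rewrite /dim; try lia; apply/eqP; lia.
  - rewrite Emul ?ifF //; rewrite /dim; try lia; apply/eqP; lia.
  - rewrite Emul ?ifF //; rewrite /dim; try lia; apply/eqP; lia.
rewrite (_ : (4 * n - 1 - i).+1 = 4 * n - i)%N; last lia.
apply: (two_factor dim2).
- rewrite Emul ?ifF //; rewrite /dim; try lia; apply/eqP; lia.
- rewrite Emul ?ifF //; rewrite /dim; try lia; apply/eqP; lia.
- rewrite Emul ?ifF //; rewrite /dim; try lia; apply/eqP; lia.
- rewrite Emul ?ifF //; rewrite /dim; try lia; apply/eqP; lia.
Qed.

Lemma size_us_of i t : size (us_of i t) = size (sl_of n i).
Proof. by rewrite /us_of /sl_of; case: eqP. Qed.

Lemma so_to_sl w (ts : seq R) : all (fun i => (0 < i) && (i <= 2 * n - 1))%N w ->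
  size ts = size w ->
  word_prod (@Xso R n) w ts =
  word_prod (@Xsl R n) (flatten (map (sl_of n) w)) (flatten [seq us_of p.1 p.2 | p <- zip w ts]).
Proof.
elim: w ts => [|i w IH] [|t ts] //= hw hs.
case/andP: hw => /andP [i0 i2] hw.
rewrite word_prod_cat ?size_us_of // -expm_Xso //.
by rewrite /word_prod /= -/(word_prod _ _ _) IH //; case: hs.
Qed.

Lemma size_us w (ts : seq R) : size ts = size w ->
  size (flatten [seq us_of p.1 p.2 | p <- zip w ts]) = size (flatten (map (sl_of n) w)).
Proof.
elim: w ts => [|i w IH] [|t ts] //= hs.
by rewrite !size_cat size_us_of IH //; case: hs.
Qed.

Lemma pos_us w (ts : seq R) : all (fun t => 0 < t) ts ->
  all (fun u => 0 < u) (flatten [seq us_of p.1 p.2 | p <- zip w ts]).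
Proof.
elim: w ts => [|i w IH] [|t ts] //= /andP [t0 hts].
rewrite all_cat IH // andbT /us_of; case: eqP => _ /=; rewrite ?t0 //.
by rewrite divr_gt0 ?ltr0n.
Qed.

End Main.

Local Open Scope ring_scope.
Theorem mainTheorem19 (R : realType) (n : nat) (hn : (1 <= n)%N)
  (ts : seq R) (hsize : size ts = size (so_word n))
  (hpos : all (fun t => 0 < t) ts) :
  in_pos_semigroup (@Xsl R n) (sl_word n) (word_prod (@Xso R n) (so_word n) ts)
  /\ upper_TP (word_prod (@Xso R n) (so_word n) ts).
Proof.
set us := flatten [seq us_of n p.1 p.2 | p <- zip (so_word n) ts].
have eqW : word_prod (@Xso R n) (so_word n) ts = word_prod (@Xsl R n) (sl_word n) us.
  by rewrite (so_to_sl hn) ?flat_so // so_range.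
have szu : size us = size (sl_word n) by rewrite /us size_us // flat_so.
have posu : all (fun u => 0 < u) us by exact: pos_us.
have rng : all (fun j => (0 < j) && (j < dim n))%N (sl_word n) by exact: sl_range.
split; first by exists us; split.
rewrite eqW (word_prod_Xsl hn) //; split.
  by move=> i j ji; apply: (prodx_upper (i0n hn)).
move=> k I J hI hJ hIJ.
case: k I J hI hJ hIJ => [|k] I J hI hJ hIJ; first by rewrite det_mx00 ltr01.
pose p := fun a : nat => nat_of_ord (I (insubd ord0 a)).
pose q := fun a : nat => nat_of_ord (J (insubd ord0 a)).
have ins : forall a : 'I_k.+1, insubd ord0 (val a) = a.
  by move=> a; apply: val_inj; rewrite val_insubd ltn_ord.
have pE : forall a : 'I_k.+1, p a = I a by move=> a; rewrite /p ins.
have qE : forall a : 'I_k.+1, q a = J a by move=> a; rewrite /q ins.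
have ip : inc k.+1 p.
  move=> a b ab bk; have ak := ltn_trans ab bk.
  by have := hI (Ordinal ak) (Ordinal bk) ab; rewrite -(pE (Ordinal ak)) -(pE (Ordinal bk)).
have iq : inc k.+1 q.
  move=> a b ab bk; have ak := ltn_trans ab bk.
  by have := hJ (Ordinal ak) (Ordinal bk) ab; rewrite -(qE (Ordinal ak)) -(qE (Ordinal bk)).
have bp : bnd (dim n) k.+1 p by move=> a _; exact: ltn_ord.
have bq : bnd (dim n) k.+1 q by move=> a _; exact: ltn_ord.
have lpq : lek k.+1 p q.
  by move=> a ak; have := hIJ (Ordinal ak); rewrite -(pE (Ordinal ak)) -(qE (Ordinal ak)).
have rch : reach k.+1 (sl_word n) p q.
  apply: sl_reach => // a ak; have := bq a ak; rewrite /dim; lia.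
have := prodx_POS (i0n hn) rng posu szu ip iq bp bq rch.
rewrite /minor; congr (0 < \det _); apply/matrixP => a b.
rewrite subE mxE; congr (_ _ _); apply: val_inj; rewrite val_ord_of ?(pE a) ?(qE b) //.
Qed.
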